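(* Let $S=S(\lambda_1,\ldots,\lambda_d)$ be a spider whose number of vertices $n=1+\lambda_1+\cdots+\lambda_d$ is even, and let $j$ be the number of legs of odd length (necessarily $j$ is odd). Then $$[e_{(2^{n/2})}]X_S=(-1)^{\frac{j-1}{2}}\cdot 2.$$
   Context: A spider $S(\lambda_1,\ldots,\lambda_d)$, for positive integers $\lambda_1,\ldots,\lambda_d$, is the tree consisting of a vertex $v$ (the center) together with $d$ vertex-disjoint paths (legs) having $\lambda_1,\ldots,\lambda_d$ vertices respectively, where $v$ is joined by an edge to one endpoint of each leg; the length of the $i$-th leg is $\lambda_i$. $(2^{k})$ is the partition with $k$ parts equal to $2$. The chromatic symmetric function of $G$ is $X_G=\sum_\kappa \prod_{v} x_{\kappa(v)}$ over proper colorings $\kappa$, and $[e_\mu]X_G$ denotes the coefficient of $e_\mu$ in the expansion of $X_G$ in elementary symmetric functions. *)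

(* Defs.v *)
From mathcomp Require Import all_boot all_algebra.
From mathcomp Require Import mpoly.
Set Implicit Arguments. Unset Strict Implicit. Unset Printing Implicit Defensive.
Import GRing.Theory.
Local Open Scope ring_scope.

Definition proper_coloring (V : finType) (adj : rel V) (N : nat)
    (kappa : {ffun V -> 'I_N}) : bool :=
  [forall x, forall y, adj x y ==> (kappa x != kappa y)].

Definition chrom_sym (V : finType) (adj : rel V) (N : nat) : {mpoly int[N]} :=
  \sum_(kappa : {ffun V -> 'I_N} | proper_coloring adj kappa)
     \prod_(v : V) 'X_(kappa v).

Definition is_partition_of (n : nat) (l : seq nat) : bool :=
  [&& sorted geq l, all (fun x => 0 < x)%N l & sumn l == n].

(* The (duplicate-free) list of all partitions of n: every partition of n has
   at most n parts, each at most n, so it arises from some n-tuple over 'I_(n+1)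
   after removing the zero entries. *)
Definition partitions_of (n : nat) : seq (seq nat) :=
  [seq l <- undup [seq [seq x <- map val (tval t) | (0 < x)%N]
                   | t <- enum {: n.-tuple 'I_n.+1}]
   | is_partition_of n l].

Definition elem_sym (N : nat) (l : seq nat) : {mpoly int[N]} :=
  \prod_(k <- l) mesym N int k.

Definition e_expansion (N n : nat) (f : {mpoly int[N]}) (c : seq nat -> int) : Prop :=
  f = \sum_(l <- partitions_of n) c l *: elem_sym N l.

(* S(lam_1,...,lam_d): vertices 0..n-1 with n = 1 + sum lam_i; vertex 0 is the
   center; leg i occupies the consecutive vertices
   1 + lam_1+...+lam_{i-1}, ..., lam_1+...+lam_i  (a path), and its first
   vertex (the "leg start") is joined to the center. *)
Definition spider_n (lam : seq nat) : nat := (1 + sumn lam)%N.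

Definition leg_start (lam : seq nat) (v : nat) : bool :=
  has (fun i => v == (1 + sumn (take i lam))%N) (iota 0 (size lam)).

Definition spider_adj (lam : seq nat) : rel 'I_(spider_n lam) :=
  fun x y =>
    [|| ((val x == 0%N) && leg_start lam (val y)),
        ((val y == 0%N) && leg_start lam (val x)),
        [&& val x != 0%N, val y == (val x).+1 & ~~ leg_start lam (val y)]
      | [&& val y != 0%N, val x == (val y).+1 & ~~ leg_start lam (val x)]].

(* X_S computed in n = |V(S)| variables (enough to determine the
   coefficients of all e_lambda with lambda |- n). *)
Definition spider_X (lam : seq nat) : {mpoly int[spider_n lam]} :=
  @chrom_sym _ (@spider_adj lam) (spider_n lam).

(* Main.v *)
Require Import Defs.
From mathcomp Require Import all_boot all_algebra.
From mathcomp Require Import mpoly.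
From mathcomp Require Import fingroup perm.
From mathcomp Require Import zify.
Import GRing.Theory.
Local Open Scope ring_scope.
Section Spider.
Local Open Scope nat_scope.
Variable lam : seq nat.
Hypothesis lampos : all (fun x => 0 < x)%N lam.

Definition st (i : nat) : nat := (1 + sumn (take i lam))%N.

Fixpoint par (v : nat) : bool :=
  match v with 0 => false | u.+1 => if leg_start lam u.+1 then true else ~~ par u end.

Lemma leg_startP v : leg_start lam v = has (fun i => v == st i) (iota 0 (size lam)).
Proof. by []. Qed.

Lemma leg_start_pos v : leg_start lam v -> (0 < v)%N.
Proof. by case/hasP=> i _ /eqP ->. Qed.

Lemma leg_start1 : (0 < size lam)%N -> leg_start lam 1.
Proof. move=> h; apply/hasP; exists 0%N; first by rewrite mem_iota. by rewrite /= take0. Qed.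

Lemma st_mono {i j} : (i <= j)%N -> (st i <= st j)%N.
Proof.
move=> hij; rewrite /st leq_add2l.
rewrite -(subnKC hij) takeD sumn_cat leq_addr //.
Qed.

Lemma stS i : (i < size lam)%N -> st i.+1 = (st i + nth 0 lam i)%N.
Proof.
move=> hi; rewrite /st (take_nth 0 hi) -cats1 sumn_cat /= addn0 addnA //.
Qed.

Lemma nth_pos i : (i < size lam)%N -> (0 < nth 0 lam i)%N.
Proof. by move=> hi; move/allP: lampos; apply; rewrite mem_nth. Qed.

Lemma st_size : st (size lam) = spider_n lam.
Proof. by rewrite /st take_size. Qed.

Lemma not_leg_start {i t} : (i < size lam)%N -> (0 < t < nth 0 lam i)%N ->
  ~~ leg_start lam (st i + t).
Proof.
move=> hi /andP[t0 tL]; apply/hasP=> -[i' _ /eqP e].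
case: (leqP i' i) => h.
  have := st_mono h; rewrite /st in e *; lia.
have := st_mono h; rewrite stS // /st in e *; lia.
Qed.

Lemma leg_start_st i : (i < size lam)%N -> leg_start lam (st i).
Proof. by move=> hi; apply/hasP; exists i; rewrite ?mem_iota. Qed.

Lemma par_leg i t : (i < size lam)%N -> (t < nth 0 lam i)%N -> par (st i + t) = ~~ odd t.
Proof.
move=> hi; elim: t => [|t IH] ht.
  by rewrite addn0 /st add1n /= -/(st i) leg_start_st.
have h1 : (0 < t.+1 < nth 0 lam i)%N by rewrite ht.
have h2 : (t < nth 0 lam i)%N by apply: ltnW.
rewrite addnS; change (par (st i + t).+1) with
  (if leg_start lam (st i + t).+1 then true else ~~ par (st i + t)).
by rewrite -addnS (negbTE (not_leg_start hi h1)) IH.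
Qed.

Lemma count_odd_iota L : count odd (iota 0 L) = L./2.
Proof.
elim: L => [|L IH] //; rewrite -addn1 iotaD count_cat IH /= addn0 add0n.
rewrite -[in RHS](odd_double_half L) addn1 /=; case: (odd L) => /=; lia.
Qed.

Definition D v := count (fun u => ~~ par u) (iota 0 v).

Lemma D_st i : (i <= size lam)%N -> (2 * D (st i) + count odd (take i lam) = st i + 1)%N.
Proof.
elim: i => [|i IH] hi; first by rewrite /D /st take0 /=.
have hi' : (i < size lam)%N by [].
rewrite stS // /D iotaD count_cat -/(D (st i)) (take_nth 0 hi') -cats1 count_cat /=.
have E : iota (st i) (nth 0 lam i) = map (addn (st i)) (iota 0 (nth 0 lam i)).
  by rewrite -iotaDl addn0.
rewrite E count_map.
have -> : count (preim (addn (st i)) (fun u : nat => ~~ par u)) (iota 0 (nth 0 lam i))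
   = count odd (iota 0 (nth 0 lam i)).
  apply/eq_in_count => t; rewrite mem_iota add0n => /andP[_ ht].
  by change (~~ par (st i + t) = odd t); rewrite par_leg // negbK.
rewrite count_odd_iota.
have := IH (ltnW hi); have := odd_double_half (nth 0 lam i).
case: (odd (nth 0 lam i)) => /=; lia.
Qed.

End Spider.
Lemma size_le_sumn {l : seq nat} : all (fun x => 0 < x)%N l -> (size l <= sumn l)%N.
Proof. elim: l => [|x l IH] //= /andP[x0 /IH]; lia. Qed.

Lemma mem_le_sumn (l : seq nat) x : x \in l -> (x <= sumn l)%N.
Proof.
elim: l => [|y l IH] //=; rewrite inE => /orP[/eqP ->|/IH]; lia.
Qed.

Lemma partitions_ofP (n : nat) (l : seq nat) :
  is_partition_of n l -> l \in partitions_of n.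
Proof.
move=> hl; rewrite /partitions_of mem_filter hl /= mem_undup.
case/and3P: hl => _ hpos /eqP hs.
pose s0 := l ++ nseq (n - size l) 0%N.
have szs0 : size s0 = n.
  rewrite size_cat size_nseq; have := size_le_sumn hpos; rewrite hs; lia.
have les0 : all (fun x => x <= n)%N s0.
  apply/allP=> x; rewrite mem_cat => /orP[/mem_le_sumn|]; first by rewrite hs.
  by move/nseqP=> [->].
pose s1 := [seq (@inord n x) | x <- s0].
have szs1 : size s1 == n by rewrite size_map szs0.
apply/mapP; exists (Tuple szs1); first by rewrite mem_enum.
rewrite /= /s1 -map_comp.
have -> : [seq (val \o @inord n) x | x <- s0] = s0.
  rewrite -[RHS]map_id; apply/eq_in_map => x hx /=.
  by apply: inordK; rewrite ltnS; move/allP: les0; apply.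
rewrite /s0 filter_cat.
have -> : [seq x <- l | (0 < x)%N] = l by apply/all_filterP.
suff -> : [seq x <- nseq (n - size l) 0%N | (0 < x)%N] = [::] by rewrite cats0.
by elim: (n - size l)%N.
Qed.

Lemma partitions_uniq n : uniq (partitions_of n).
Proof. by rewrite /partitions_of filter_uniq // undup_uniq. Qed.
Lemma prod_sign (s : seq nat) (P : pred nat) :
  \prod_(i <- s) (if P i then 1 else -1 : int) = (-1) ^+ count (fun i => ~~ P i) s.
Proof.
elim: s => [|x s IH]; first by rewrite big_nil.
rewrite big_cons IH /=; case: (P x) => /=; first by rewrite mul1r add0n.
by rewrite add1n exprS.
Qed.

Section Colorings.
Variable lam : seq nat.
Hypothesis lampos : all (fun x => 0 < x)%N lam.
Hypothesis lamne : (0 < size lam)%N.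
Local Notation N := (spider_n lam).

Lemma N_ge2 : (2 <= N)%N.
Proof.
case: lam lampos lamne => [|x l] //= /andP[x0 _] _; rewrite /spider_n /=; lia.
Qed.

Definition colv (b : bool) (w : 'I_N) : 'I_N := @inord (sumn lam) (b (+) par lam w).
Definition col (b : bool) : {ffun 'I_N -> 'I_N} := [ffun w => colv b w].

Lemma colv_val b w : val (colv b w) = (b (+) par lam w : nat).
Proof.
rewrite /colv; apply: (@inordK (sumn lam)).
by have := N_ge2; rewrite /spider_n; case: (_ (+) _) => /=; lia.
Qed.

Lemma adjP (x y : 'I_N) : spider_adj x y ->
  [\/ (val x == 0%N) && leg_start lam (val y),
      (val y == 0%N) && leg_start lam (val x),
      [&& val x != 0%N, val y == (val x).+1 & ~~ leg_start lam (val y)]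
    | [&& val y != 0%N, val x == (val y).+1 & ~~ leg_start lam (val x)]].
Proof. by rewrite /spider_adj => /or4P. Qed.

Lemma par_ls {v} : leg_start lam v -> par lam v.
Proof. case: v => [|v] h; first by have := @leg_start_pos lam 0 h. by rewrite /= h. Qed.

Lemma par_nls {v} : ~~ leg_start lam v.+1 -> par lam v.+1 = ~~ par lam v.
Proof. by move=> /= /negbTE ->. Qed.

Lemma adj_par {x y : 'I_N} : spider_adj x y -> par lam x != par lam y.
Proof.
case/adjP=> [/andP[/eqP e ls]|/andP[/eqP e ls]|/and3P[_ /eqP e ls]|/and3P[_ /eqP e ls]].
- by rewrite e (par_ls ls).
- by rewrite e (par_ls ls).
- by rewrite e par_nls -?e //; case: (par _ _).
- by rewrite e par_nls -?e //; case: (par _ _).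
Qed.
Lemma col_proper b : proper_coloring (@spider_adj lam) (col b).
Proof.
apply/forallP=> x; apply/forallP=> y; apply/implyP=> h; rewrite !ffunE.
apply/eqP=> /(congr1 val); rewrite !colv_val.
by have := adj_par h; case: (par _ _); case: (par _ _); case: b.
Qed.

Lemma col_neq : col false != col true.
Proof.
apply/eqP=> /ffunP /(_ ord0); rewrite !ffunE => /(congr1 val); rewrite !colv_val.
by case: (par _ _).
Qed.

Lemma lt2E x : (x < 2)%N -> x = (x == 1%N) :> nat.
Proof. by case: x => [|[|]]. Qed.

Lemma two_col (k : {ffun 'I_N -> 'I_N}) :
  proper_coloring (@spider_adj lam) k -> (forall w, val (k w) < 2)%N ->
  exists b, k = col b.
Proof.
move=> pk k2; pose o0 : 'I_N := ord0.
have adjk x y : spider_adj x y -> k x != k y.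
  by move=> h; move/forallP: pk => /(_ x) /forallP /(_ y) /implyP; apply.
pose b := (val (k o0) == 1%N).
have flip x y (bb : bool) : spider_adj x y -> val (k x) = bb -> val (k y) = ~~ bb.
  move=> /adjk /eqP h e; have kx := k2 x; have ky := k2 y.
  have : val (k x) != val (k y) by apply/eqP=> e'; apply: h; apply: val_inj.
  rewrite e; move: ky; case: (val (k y)) => [|[|]] //; by case: (bb).
have claim : forall v (hv : (v < N)%N), val (k (Ordinal hv)) = b (+) par lam v.
  elim=> [|v IH] hv.
    have -> : Ordinal hv = o0 by apply: val_inj.
    by change (par lam 0) with false; rewrite addbF; exact: lt2E (k2 o0).
  have hv' : (v < N)%N by apply: ltnW.
  case ls : (leg_start lam v.+1).
    change (par lam v.+1) with (if leg_start lam v.+1 then true else ~~ par lam v).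
    rewrite ls addbT; have -> : b = b (+) false by rewrite addbF.
    apply: (flip o0); last by rewrite addbF; exact: lt2E (k2 o0).
    by rewrite /spider_adj /= ls.
  rewrite par_nls ?ls // addbN; apply: (flip (Ordinal hv')); last exact: IH.
  rewrite /spider_adj /= ls eqxx /= andbT andbF /=.
  case: v {IH hv hv'} ls => //.
  by rewrite (@leg_start1 lam lamne).
exists b; apply/ffunP=> w; rewrite ffunE; apply: val_inj; rewrite colv_val.
by case: w => w hw; rewrite claim.
Qed.
Definition sv : seq int := [:: -1; 1] ++ nseq (N - 2) 0.
Definition ev (i : 'I_N) : int := nth 0 sv i.

Lemma ev_ge2 i : (2 <= val i)%N -> ev i = 0.
Proof.
move=> h; rewrite /ev nth_cat /= ltnNge h /= nth_nseq; by case: ifP.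
Qed.

Lemma ev_col b w : ev (colv b w) = if b (+) par lam w then 1 else -1.
Proof. by rewrite /ev colv_val; case: (_ (+) _). Qed.

Lemma prod_col b : \prod_(w : 'I_N) ev (col b w)
  = (-1) ^+ count (fun i => ~~ (b (+) par lam i)) (iota 0 N).
Proof.
rewrite (eq_bigr (fun w : 'I_N => (fun i => if b (+) par lam i then 1 else -1 : int) (val w)));
  last by move=> w _; rewrite ffunE ev_col.
by rewrite -(big_mkord xpredT (fun i => if b (+) par lam i then 1 else -1 : int)) prod_sign.
Qed.

Lemma ev_X : meval ev (spider_X lam)
  = (-1) ^+ D lam N + (-1) ^+ (N - D lam N).
Proof.
rewrite /spider_X /chrom_sym raddf_sum /=.
rewrite (eq_bigr (fun k : {ffun 'I_N -> 'I_N} => \prod_(w : 'I_N) ev (k w))); last first.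
  by move=> k _; rewrite rmorph_prod; apply: eq_bigr => w _; exact: mevalXU.
rewrite (bigD1 (col false)) ?col_proper //= (bigD1 (col true)) /=; last first.
  by rewrite col_proper eq_sym col_neq.
rewrite [X in _ + (_ + X)]big1 ?addr0; last first.
  move=> k /andP[/andP[pk n0] n1].
  case: (boolP [forall w, val (k w) < 2]%N) => [/forallP h|].
    by have [b kb] := @two_col k pk h; move: n0 n1; rewrite kb; clear kb; case: b; rewrite eqxx // andbF.
  move=> /forallPn [w]; rewrite -leqNgt => hw.
  by apply/eqP/prodf_eq0; exists w => //; rewrite ev_ge2.
rewrite !prod_col; congr (_ + _).
have e : (count (par lam) (iota 0 N) + D lam N)%N = N.
  by rewrite -{3}(size_iota 0 N) -(count_predC (par lam)).
have -> : count (fun i => ~~ (true (+) par lam i)) (iota 0 N) = count (par lam) (iota 0 N).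
  by apply: eq_count => i; rewrite /= negbK.
by rewrite -{2}e addnK.
Qed.
Lemma size_sv : size sv == N.
Proof. rewrite /sv size_cat size_nseq /=; apply/eqP; have := N_ge2; lia. Qed.

Lemma prod_sv : \prod_(c <- sv) ('X - c%:P) = ('X^2 - 1) * 'X^(N - 2) :> {poly int}.
Proof.
rewrite /sv big_cat /= !big_cons big_nil mulr1 big_nseq.
have -> : iter (N - 2) ( *%R ('X - 0%:P)) 1 = 'X^(N-2) :> {poly int}.
  elim: (N - 2)%N => [|m IH] //=; by rewrite IH subr0 exprS.
congr (_ * _); rewrite rmorphN /= opprK mulrC -subr_sqr expr1n //.
Qed.

Lemma ev_mesym k : meval ev (mesym N int k) = if k == 0%N then 1 else if k == 2%N then -1 else 0.
Proof.
have N2 := N_ge2.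
case: (leqP k N) => hk; last first.
  rewrite mesym_geqnE // meval0; case: ifP => [/eqP k0|_]; first by move: hk; rewrite k0.
  by case: ifP => // /eqP k2; move: hk N2; rewrite k2; lia.
pose cs : N.-tuple int := Tuple size_sv.
have hk' : (k < N.+1)%N by [].
have E := mroots_coeff cs (Ordinal hk').
have -> : meval ev (mesym N int k) = meval (tnth cs) (mesym N int k).
  by apply: meval_eq => i; rewrite (tnth_nth 0).
have E2 : (mesym N int k).@[tnth cs] = (-1) ^+ k * (\prod_(c <- cs) ('X - c%:P))`_(N - k).
  by rewrite E mulrA -exprD -signr_odd oddD addbb expr0 mul1r.
rewrite E2 /= prod_sv coefMXn.
case: k hk {E E2 hk'} => [|[|[|k]]] hk /=.
- rewrite ltnNge leq_subr /= subn0 expr0 mul1r coefB coefXn coefC.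
  have -> : (N - (N - 2))%N = 2%N by lia.
  by rewrite eqxx /= subr0.
- have -> : (N - 1 < N - 2)%N = false by lia.
  have -> : (N - 1 - (N - 2))%N = 1%N by lia.
  by rewrite coefB coefXn coefC /= subr0 mulr0.
- have -> : (N - 2 < N - 2)%N = false by lia.
  rewrite subnn coefB coefXn coefC /=.
  by rewrite sub0r expr2 mulrNN !mul1r.
- have -> : (N - k.+3 < N - 2)%N = true by lia.
  by rewrite mulr0.
Qed.
Definition fsign (k : nat) : int := if k == 0%N then 1 else if k == 2%N then -1 else 0.

Lemma prod_f (l : seq nat) : all (fun x => 0 < x)%N l ->
  \prod_(k <- l) fsign k = if all (pred1 2%N) l then (-1) ^+ size l else 0.
Proof.
elim: l => [|x l IH] /=; first by rewrite big_nil.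
case/andP=> x0 /IH {}IH; rewrite big_cons IH /fsign.
case: x x0 => [|[|[|x]]] //= _; rewrite ?mul0r //.
by case: (all _ _); rewrite ?mulr0 // exprS.
Qed.

Lemma nseq2_part : ~~ odd N -> is_partition_of N (nseq N./2 2%N).
Proof.
move=> ev2; apply/and3P; split.
- by elim: N./2 => [|[|m]] //= IH.
- by apply/allP=> x /nseqP [->].
- rewrite sumn_nseq; apply/eqP; have := odd_double_half N; rewrite (negbTE ev2) add0n; lia.
Qed.

Lemma ev_expansion (c : seq nat -> int) : ~~ odd N ->
  meval ev (\sum_(l <- partitions_of N) c l *: elem_sym N l)
  = c (nseq N./2 2%N) * (-1) ^+ N./2.
Proof.
move=> ev2.
rewrite raddf_sum /=.
have F l : l \in partitions_of N ->
    meval ev (c l *: elem_sym N l) = c l * if l == nseq N./2 2%N then (-1) ^+ N./2 else 0.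
  rewrite mem_filter => /andP[pl _].
  rewrite mevalZ /elem_sym rmorph_prod.
  rewrite (eq_bigr fsign); last by move=> k _; exact: ev_mesym.
  case/and3P: (pl) => _ pos /eqP sl.
  rewrite prod_f //; congr (_ * _).
  case: ifP => [/all_pred1P e|na].
    have hs : size l = N./2.
      by move: sl; rewrite {1}e sumn_nseq => <-; rewrite mul2n doubleK.
    by rewrite {2}e hs eqxx.
  case: eqP => // e; move: na; rewrite e all_pred1_nseq //.
rewrite big_seq (eq_bigr _ F) -big_seq.
rewrite (bigD1_seq (nseq N./2 2%N)) /=; last exact: partitions_uniq.
  rewrite eqxx big1 ?addr0 // => l /negbTE ->; by rewrite mulr0.
exact: partitions_ofP (nseq2_part ev2).
Qed.
End Colorings.
Lemma sign_solve (c : int) (D j N : nat) : ~~ odd N -> (2 * D + j = N + 1)%N ->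
  (-1) ^+ D + (-1) ^+ (N - D) = c * (-1) ^+ N./2 -> c = (-1) ^+ j.-1./2 * 2.
Proof.
move=> eN h.
have hN := odd_double_half N; rewrite (negbTE eN) add0n in hN.
have hj := odd_double_half j.
have oj : odd j.
  by move: (congr1 odd h); rewrite !oddD (negbTE eN); case: (odd D); case: (odd j).
rewrite oj in hj.
have -> : j.-1./2 = j./2 by rewrite -{1}hj add1n /= doubleK.
have e1 : (N - D = D + 2 * j./2)%N by lia.
have e2 : (N./2 = D + j./2)%N by lia.
rewrite e1 e2 -!(signr_odd _ (_ + _)) -signr_odd -[(-1) ^+ j./2]signr_odd !oddD.
case: (odd D); case: (odd j./2) => /=; rewrite ?expr1 ?expr0; lia.
Qed.
Lemma dhomog_bigprod (n : nat) (I : Type) (r : seq I) (F : I -> {mpoly int[n]}) (d : I -> nat) :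
  (forall i, F i \is (d i).-homog) -> \prod_(i <- r) F i \is (\sum_(i <- r) d i)%N.-homog.
Proof.
move=> h; elim: r => [|x r IH]; first by rewrite !big_nil dhomog1.
by rewrite !big_cons; apply: dhomogM.
Qed.

Lemma mesym_homog (n k : nat) : mesym n int k \is k.-homog.
Proof.
rewrite mesymE; apply: rpred_sum => h /eqP hk.
by rewrite dhomogX; apply/eqP; rewrite -hk; exact: mdeg_mesym1.
Qed.

Lemma pihomog_other {n d d' : nat} {q : {mpoly int[n]}} :
  q \is d'.-homog -> d' != d -> pihomog mdeg d q = 0.
Proof.
move=> /dhomogP hq ne; rewrite pihomogE big_seq_cond big1 // => m /andP[hm /eqP e].
by move: (hq m hm) ne; rewrite e => ->; rewrite eqxx.
Qed.

Section Expansion.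
Variable n : nat.
Local Notation S := [tuple mesym n int i.+1 | i < n].

Definition mu (l : seq nat) : 'X_{1..n} := [multinom count_mem i.+1 l | i < n].

Lemma prod_count (R : comRingType) (F : nat -> R) (l : seq nat) :
  all (fun x => 0 < x <= n)%N l ->
  \prod_(k <- l) F k = \prod_(i < n) F i.+1 ^+ count_mem i.+1 l.
Proof.
elim: l => [|x l IH] /=.
  by move=> _; rewrite big_nil big1 // => i _; rewrite expr0.
case/andP=> /andP[x0 xn] /IH IH2; rewrite big_cons IH2.
have hx : (x.-1 < n)%N by lia.
rewrite [RHS](eq_bigr (fun i : 'I_n => F i.+1 ^+ (x == i.+1) * F i.+1 ^+ count_mem i.+1 l)); last first.
  by move=> i _ /=; rewrite exprD.
rewrite big_split /=; congr (_ * _).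
rewrite (bigD1 (Ordinal hx)) //= big1 ?mulr1.
  have -> : x.-1.+1 = x by lia.
  by rewrite eqxx expr1.
move=> i /eqP ne; have -> : (x == i.+1) = false.
  by apply/negbTE/eqP => e; apply: ne; apply: val_inj => /=; lia.
by rewrite expr0.
Qed.

Lemma sum_count (l : seq nat) :
  all (fun x => 0 < x <= n)%N l ->
  sumn l = (\sum_(i < n) count_mem i.+1 l * i.+1)%N.
Proof.
elim: l => [|x l IH] /=.
  by move=> _; rewrite big1.
case/andP=> /andP[x0 xn] /IH ->.
have hx : (x.-1 < n)%N by lia.
rewrite [RHS](eq_bigr (fun i : 'I_n => (x == i.+1) * i.+1 + count_mem i.+1 l * i.+1)%N); last first.
  by move=> i _; rewrite /= mulnDl.
rewrite big_split /=; congr (_ + _)%N.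
rewrite (bigD1 (Ordinal hx)) //= big1 ?addn0.
  have -> : x.-1.+1 = x by lia.
  by rewrite eqxx mul1n.
move=> i /eqP ne; have -> : (x == i.+1) = false.
  by apply/negbTE/eqP => e; apply: ne; apply: val_inj => /=; lia.
by [].
Qed.

Lemma part_bound {l} : is_partition_of n l -> all (fun x => 0 < x <= n)%N l.
Proof.
case/and3P=> _ pos /eqP sl; apply/allP => x hx.
move/allP: pos => /(_ x hx) -> /=; rewrite -sl; exact: mem_le_sumn.
Qed.

Lemma XS_mu l : is_partition_of n l -> 'X_[mu l] \mPo S = elem_sym n l.
Proof.
move=> pl; rewrite comp_mpolyX /elem_sym (@prod_count _ _ l (part_bound pl)).
by apply: eq_bigr => i _; rewrite tnth_map tnth_ord_tuple mnmE.
Qed.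

Lemma wgt_mu l : is_partition_of n l -> mnmwgt (mu l) = n.
Proof.
move=> pl; case/and3P: (pl) => _ _ /eqP sl.
rewrite -[RHS]sl (@sum_count l (part_bound pl)).
by apply: eq_bigr => i _; rewrite mnmE.
Qed.

Lemma XS_homog (m : 'X_{1..n}) : 'X_[m] \mPo S \is (mnmwgt m).-homog.
Proof.
rewrite comp_mpolyX.
have -> : mnmwgt m = (\sum_(i < n) (i.+1 * m i))%N.
  by apply: eq_bigr => i _; rewrite mulnC.
apply: dhomog_bigprod => i; rewrite tnth_map tnth_ord_tuple.
exact/dhomogMn/mesym_homog.
Qed.

Lemma geq_trans : transitive geq.
Proof. by move=> y x z h1 h2; apply: leq_trans h2 h1. Qed.
Lemma geq_anti : antisymmetric geq.
Proof. by move=> x y h; apply: anti_leq; rewrite andbC. Qed.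
Lemma geq_tot : total geq.
Proof. by move=> x y; apply: leq_total. Qed.

Lemma mu_inj l1 l2 : is_partition_of n l1 -> is_partition_of n l2 -> mu l1 = mu l2 -> l1 = l2.
Proof.
move=> p1 p2 e.
apply: (sorted_eq geq_trans geq_anti); [by case/and3P: p1 | by case/and3P: p2 |].
apply/allP => x; rewrite mem_cat => hx.
have hb : (0 < x <= n)%N.
  by case/orP: hx => hx; [move/allP: (part_bound p1) | move/allP: (part_bound p2)]; apply.
have hx' : (x.-1 < n)%N by lia.
have := congr1 (fun m : 'X_{1..n} => m (Ordinal hx')) e; rewrite !mnmE /=.
have -> : x.-1.+1 = x by lia.
by move=> ->.
Qed.

Definition lam_of (m : 'X_{1..n}) : seq nat :=
  sort geq (flatten [seq nseq (m i) i.+1 | i <- enum 'I_n]).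

Lemma lam_ofP (m : 'X_{1..n}) : mnmwgt m = n ->
  is_partition_of n (lam_of m) /\ mu (lam_of m) = m.
Proof.
move=> wm.
pose s := flatten [seq nseq (m i) i.+1 | i <- enum 'I_n].
have ps : perm_eq (lam_of m) s by rewrite /lam_of perm_sort perm_refl.
split.
  apply/and3P; split.
  - exact: (sort_sorted geq_tot).
  - apply/allP => x; rewrite (perm_mem ps) => /flattenP [y /mapP [i _ ->]].
    by move/nseqP => [->].
  - apply/eqP; rewrite -[RHS]wm (perm_sumn ps) sumn_flatten -map_comp /mnmwgt.
    rewrite sumnE big_map big_enum /=; apply: eq_bigr => i _.
    by rewrite sumn_nseq mulnC.
apply/mnmP => j; rewrite mnmE.
move/seq.permP: ps => ->.
rewrite count_flatten -map_comp sumnE big_map big_enum /=.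
rewrite (bigD1 j) //= count_nseq /= eqxx mul1n big1 ?addn0 // => i ne.
rewrite count_nseq /=; have -> : (i.+1 == j.+1) = false.
  by apply/negbTE; rewrite eqSS; apply: contra ne => /eqP e; apply/eqP/val_inj.
by rewrite mul0n.
Qed.

Lemma exists_expansion (p : {mpoly int[n]}) :
  p \is symmetric -> p \is n.-homog -> exists c, e_expansion n p c.
Proof.
move=> ps ph.
have [t [tE _]] := sym_fundamental ps.
exists (fun l => t@_(mu l)); rewrite /e_expansion.
pose G (m : 'X_{1..n}) := t@_m *: ('X_[m] \mPo S).
have E1 : p = \sum_(m <- msupp t | mnmwgt m == n) G m.
  rewrite -(pihomog_dE ph) -tE comp_mpolyEX raddf_sum [RHS]big_mkcond /=.
  apply: eq_bigr => m _; rewrite linearZ /= /G.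
  case: eqP => [e|ne].
    by have := XS_homog m; rewrite e => h; rewrite pihomog_dE.
  by rewrite (pihomog_other (XS_homog m)) ?scaler0 //; apply/eqP.
have E2 : \sum_(l <- partitions_of n) t@_(mu l) *: elem_sym n l
        = \sum_(m <- map mu (partitions_of n)) G m.
  rewrite big_map big_seq [RHS]big_seq; apply: eq_bigr => l hl.
  by rewrite /G XS_mu //; move: hl; rewrite mem_filter => /andP[].
rewrite E2 {1}E1 -big_filter.
set s2 := filter _ _; set s1 := map mu _.
have u1 : uniq s1.
  rewrite map_inj_in_uniq ?partitions_uniq // => l1 l2.
  rewrite !mem_filter => /andP[p1 _] /andP[p2 _]; exact: mu_inj.
have u2 : uniq s2 by rewrite filter_uniq // msupp_uniq.
rewrite [RHS](bigID (mem s2)) /= [X in _ = _ + X]big1_seq ?addr0; last first.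
  move=> m /andP[nm hm]; rewrite /G memN_msupp_eq0 ?scale0r //.
  apply: contra nm => hm2; rewrite mem_filter hm2 andbT.
  move/mapP: hm => [l hl ->]; move: hl; rewrite mem_filter => /andP[pl _].
  by rewrite wgt_mu.
rewrite -[RHS]big_filter; apply: perm_big; apply: uniq_perm => //.
  by rewrite filter_uniq.
move=> m; rewrite [RHS]mem_filter; apply/idP/andP => [hm|[] //]; split => //.
move: hm; rewrite mem_filter => /andP[/eqP wm _].
have [pl el] := @lam_ofP m wm.
by apply/mapP; exists (lam_of m) => //; apply: partitions_ofP.
Qed.

End Expansion.
Lemma msymXi (N : nat) (s : 'S_N) (i : 'I_N) : msym s ('X_i : {mpoly int[N]}) = 'X_(s i).
Proof.
rewrite msymX; apply: f_equal; apply/mnmP => j; rewrite !mnmE.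
by rewrite (canF_eq (permK s)).
Qed.

Lemma chrom_homog (V : finType) (adj : rel V) (N : nat) :
  chrom_sym adj N \is #|V|.-homog.
Proof.
rewrite /chrom_sym; apply: rpred_sum => k _.
have := @dhomog_bigprod N V (index_enum V) (fun v => 'X_(k v)) (fun _ => 1%N).
rewrite sum1_card; apply => v.
by rewrite dhomogX; apply/eqP; exact: mdeg1.
Qed.

Lemma chrom_symmetric (V : finType) (adj : rel V) (N : nat) :
  chrom_sym adj N \is symmetric.
Proof.
apply/issymP => s; rewrite /chrom_sym raddf_sum /=.
rewrite (eq_bigr (fun k : {ffun V -> 'I_N} => \prod_(v : V) 'X_(s (k v)))); last first.
  by move=> k _; rewrite rmorph_prod; apply: eq_bigr => v _; exact: msymXi.
pose h (k : {ffun V -> 'I_N}) : {ffun V -> 'I_N} := [ffun v => s (k v)].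
pose h' (k : {ffun V -> 'I_N}) : {ffun V -> 'I_N} := [ffun v => (s^-1)%g (k v)].
have hb : bijective h.
  exists h' => k; apply/ffunP => v; rewrite !ffunE ?permK ?permKV //.
rewrite [RHS](reindex h); last by apply: onW_bij.
apply: eq_big => k.
  apply/forallP/forallP => H x; apply/forallP => y; move/forallP: (H x) => /(_ y);
    rewrite /h !ffunE (inj_eq perm_inj) //.
by move=> _; apply: eq_bigr => v _; rewrite /h ffunE.
Qed.
Theorem lemma5p2 (lam : seq nat) :
  all (fun x => 0 < x)%N lam ->
  ~~ odd (spider_n lam) ->
  (exists c : seq nat -> int, e_expansion (spider_n lam) (spider_X lam) c) /\
  (forall c : seq nat -> int,
      e_expansion (spider_n lam) (spider_X lam) c ->
      c (nseq (spider_n lam)./2 2%N)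
        = (-1) ^+ (count odd lam).-1./2 * 2).
Proof.
move=> pos ev2.
have lamne : (0 < size lam)%N by case: lam ev2 {pos}.
split.
  apply: exists_expansion; first exact: chrom_symmetric.
  by have := @chrom_homog _ (@spider_adj lam) (spider_n lam); rewrite card_ord.
move=> c E.
have := @ev_expansion lam pos lamne c ev2; rewrite -E ev_X //.
apply: sign_solve => //.
have := @D_st lam pos (size lam) (leqnn _); rewrite st_size take_size.
by rewrite addnC.
Qed.
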